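(* Let $\Gamma_i$ be a graph of maximum degree $\Delta_i$, $i\in\{1,2\}$, and let $k_1,k_2$ be integers. Then for every integer $k\le\min\{k_1-\Delta_2,k_2-\Delta_1\}$, $a_k^o(\Gamma_1\times\Gamma_2)\le a_{k_1}^o(\Gamma_1)\,a_{k_2}^o(\Gamma_2)$.
   Context: Graphs are finite and simple. In a graph $G=(V,E)$, for $S\subseteq V$ and $v\in V$, $\delta_S(v)$ is the number of neighbours of $v$ in $S$, $\overline{S}=V\setminus S$, and $\partial(S)$ the set of vertices of $\overline{S}$ with a neighbour in $S$. A nonempty $S\subseteq V$ is an offensive $k$-alliance in $G$ if $\delta_S(v)\ge\delta_{\overline{S}}(v)+k$ for every $v\in\partial(S)$; $a_k^o(G)$ denotes the minimum cardinality of an offensive $k$-alliance in $G$. The Cartesian product $\Gamma_1\times\Gamma_2$ has vertex set $V_1\times V_2$, with $(u,v)\sim(u',v')$ iff either $u=u'$ and $v\sim v'$, or $v=v'$ and $u\sim u'$. *)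

(* Defs.v *)
From mathcomp Require Import all_boot all_order all_algebra.
Set Implicit Arguments. Unset Strict Implicit. Unset Printing Implicit Defensive.
Import Order.TTheory GRing.Theory Num.Theory.

Definition simple_graph (T : finType) (e : rel T) : Prop :=
  symmetric e /\ irreflexive e.

Definition deltaS (T : finType) (e : rel T) (S : {set T}) (v : T) : nat :=
  #|[set u in S | e v u]|.

Definition deg (T : finType) (e : rel T) (v : T) : nat := #|[set u | e v u]|.
Definition maxdeg (T : finType) (e : rel T) : nat := \max_(v : T) deg e v.

Definition boundary (T : finType) (e : rel T) (S : {set T}) : {set T} :=
  [set v in ~: S | [exists u in S, e v u]].

Definition offensive_alliance (T : finType) (e : rel T) (k : int) (S : {set T}) : bool :=
  (S != set0) &&
  [forall v in boundary e S, ((deltaS e S v)%:Z >= (deltaS e (~: S) v)%:Z + k)%R].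

(* For a nonempty
   vertex set, setT is always an offensive k-alliance (empty boundary), so the
   default value #|T| = #|setT| does not affect the minimum. *)
Definition a_off (T : finType) (e : rel T) (k : int) : nat :=
  \big[minn/#|T|]_(S : {set T} | offensive_alliance e k S) #|S|.

Definition cart_rel (T1 T2 : finType) (e1 : rel T1) (e2 : rel T2) : rel (T1 * T2) :=
  fun x y => ((x.1 == y.1) && e2 x.2 y.2) || ((x.2 == y.2) && e1 x.1 y.1).

(* Main.v *)
Require Import Defs.
From mathcomp Require Import all_boot all_order all_algebra.
From mathcomp Require Import zify.
Set Implicit Arguments. Unset Strict Implicit.

Lemma a_off_le (T : finType) (e : rel T) k (S : {set T}) :
  offensive_alliance e k S -> a_off e k <= #|S|.
Proof.
move=> h; rewrite /a_off.
have : S \in index_enum {set T} by rewrite mem_index_enum.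
elim: (index_enum _) => [//|x r IH]; rewrite inE big_cons.
case/orP=> [/eqP<-|hr]; first by rewrite h geq_minl.
case: ifP => _; last exact: IH.
by apply: leq_trans (geq_minr _ _) (IH hr).
Qed.

Lemma a_off_ex (T : finType) (e : rel T) k : 0 < #|T| ->
  exists S, offensive_alliance e k S /\ a_off e k = #|S|.
Proof.
move=> hT; rewrite /a_off.
apply: (big_ind (fun x => exists S, offensive_alliance e k S /\ x = #|S|)).
- exists setT; split; last by rewrite cardsT.
  apply/andP; split.
    by rewrite -card_gt0 cardsT.
  apply/forallP => v; apply/implyP; rewrite inE in_setC in_setT //.
- move=> x y [S [hS ->]] [S' [hS' ->]].
  case: (leqP #|S| #|S'|) => h.
    by exists S; split => //; apply/minn_idPl.
  by exists S'; split => //; apply/minn_idPr; apply: ltnW.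
- by move=> S hS; exists S.
Qed.

Section Prod.
Variables (T1 T2 : finType) (e1 : rel T1) (e2 : rel T2) (S1 : {set T1}) (S2 : {set T2}).

Lemma nbr_in1 u v : u \in S1 -> v \notin S2 ->
  deltaS (cart_rel e1 e2) (setX S1 S2) (u,v) = deltaS e2 S2 v.
Proof.
move=> hu hv; rewrite /deltaS.
have -> : [set w in setX S1 S2 | cart_rel e1 e2 (u,v) w] =
   (fun v' => (u,v')) @: [set v' in S2 | e2 v v'].
  apply/setP => [[a b]]; rewrite inE /=; apply/andP/imsetP.
  - rewrite /cart_rel /= in_setX.
    move=> [/andP[ha hb] /orP[/andP[/eqP<- h]|/andP[/eqP ebv _]]].
      by exists b => //; rewrite inE hb h.
    by rewrite ebv hb in hv.
  - move=> [v' ]; rewrite inE => /andP[h1 h2] [-> ->].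
    by rewrite /cart_rel /= in_setX hu h1 eqxx h2.
by rewrite card_imset // => x y [].
Qed.

Lemma nbr_out1 u v : u \in S1 ->
  deltaS (cart_rel e1 e2) (~: setX S1 S2) (u,v) <= deltaS e2 (~: S2) v + deg e1 u.
Proof.
move=> hu; rewrite /deltaS /deg.
apply: (@leq_trans #|((fun v' => (u,v')) @: [set v' in ~: S2 | e2 v v'])
   :|: ((fun u' => (u',v)) @: [set u' | e1 u u'])|).
  apply: subset_leq_card; apply/subsetP => [[a b]].
  rewrite !inE /cart_rel /= => /andP[hn /orP[/andP[/eqP ea h]|/andP[/eqP eb h]]].
    subst a; apply/orP; left; apply/imsetP; exists b => //.
    by rewrite !inE h andbT; rewrite hu in hn.
  subst b.
  by apply/orP; right; apply/imsetP; exists a => //; rewrite inE.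
rewrite cardsU; apply: leq_trans (leq_subr _ _) _.
by apply: leq_add; apply: leq_imset_card.
Qed.

Lemma nbr_in2 u v : u \notin S1 -> v \in S2 ->
  deltaS (cart_rel e1 e2) (setX S1 S2) (u,v) = deltaS e1 S1 u.
Proof.
move=> hu hv; rewrite /deltaS.
have -> : [set w in setX S1 S2 | cart_rel e1 e2 (u,v) w] =
   (fun u' => (u',v)) @: [set u' in S1 | e1 u u'].
  apply/setP => [[a b]]; rewrite inE /=; apply/andP/imsetP.
  - rewrite /cart_rel /= in_setX.
    move=> [/andP[ha hb] /orP[/andP[/eqP eua _]|/andP[/eqP<- h]]].
      by rewrite eua ha in hu.
    by exists a => //; rewrite inE ha h.
  - move=> [u' ]; rewrite inE => /andP[h1 h2] [-> ->].
    by rewrite /cart_rel /= in_setX hv h1 eqxx h2 orbT.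
by rewrite card_imset // => x y [].
Qed.

Lemma nbr_out2 u v : v \in S2 ->
  deltaS (cart_rel e1 e2) (~: setX S1 S2) (u,v) <= deltaS e1 (~: S1) u + deg e2 v.
Proof.
move=> hv; rewrite /deltaS /deg.
apply: (@leq_trans #|((fun u' => (u',v)) @: [set u' in ~: S1 | e1 u u'])
   :|: ((fun v' => (u,v')) @: [set v' | e2 v v'])|).
  apply: subset_leq_card; apply/subsetP => [[a b]].
  rewrite !inE /cart_rel /= => /andP[hn /orP[/andP[/eqP ea h]|/andP[/eqP eb h]]].
    subst a; by apply/orP; right; apply/imsetP; exists b => //; rewrite inE.
  subst b; apply/orP; left; apply/imsetP; exists a => //.
  by rewrite !inE h andbT; rewrite hv andbT in hn.
rewrite cardsU; apply: leq_trans (leq_subr _ _) _.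
by apply: leq_add; apply: leq_imset_card.
Qed.

End Prod.

Theorem mainTheorem12 (T1 T2 : finType) (e1 : rel T1) (e2 : rel T2)
  (G1 : simple_graph e1) (G2 : simple_graph e2)
  (ne1 : 0 < #|T1|) (ne2 : 0 < #|T2|)
  (k1 k2 k : int)
  (hk : (k <= Num.min (k1 - (maxdeg e2)%:Z) (k2 - (maxdeg e1)%:Z))%R) :
  a_off (cart_rel e1 e2) k <= a_off e1 k1 * a_off e2 k2.
Proof.
have [S1 [h1 ->]] := a_off_ex e1 k1 ne1.
have [S2 [h2 ->]] := a_off_ex e2 k2 ne2.
rewrite -cardsX; apply: a_off_le.
move: hk; rewrite Order.TotalTheory.le_min => /andP[hk1 hk2].
move/andP: h1 => [n1 /forallP a1]; move/andP: h2 => [n2 /forallP a2].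
apply/andP; split.
  case/set0Pn: n1 => x hx; case/set0Pn: n2 => y hy.
  by apply/set0Pn; exists (x, y); rewrite in_setX hx hy.
apply/forallP => [[u v]]; apply/implyP; rewrite inE => /andP[].
rewrite in_setC in_setX => hn /existsP[[a b] /andP[]].
rewrite in_setX => /andP[ha hb] hc.
have dm1 : deg e1 u <= maxdeg e1 by apply: (leq_bigmax (F := deg e1)).
have dm2 : deg e2 v <= maxdeg e2 by apply: (leq_bigmax (F := deg e2)).
move: hc; rewrite /cart_rel /= => hc.
case hu: (u \in S1); case hv: (v \in S2); rewrite ?hu ?hv //= in hn.
- have hw : e2 v b.
    case/orP: hc => [/andP[_ //]|/andP[/eqP ev _]].
    by rewrite ev hb in hv.
  have := a2 v; rewrite /boundary inE in_setC hv /=.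
  have -> : [exists u0 in S2, e2 v u0] by apply/existsP; exists b; rewrite hb hw.
  move=> /= hd.
  rewrite nbr_in1 ?hv //.
  have ho := nbr_out1 e1 e2 S2 v hu.
  move: hd ho dm1 hk2.
  move: (deltaS _ _ _) (deltaS _ _ _) (deltaS _ _ _) (deg _ _) (maxdeg _) => x y z w m.
  lia.
- have hw : e1 u a.
    case/orP: hc => [/andP[/eqP eu _]|/andP[_ //]].
    by rewrite eu ha in hu.
  have := a1 u; rewrite /boundary inE in_setC hu /=.
  have -> : [exists u0 in S1, e1 u u0] by apply/existsP; exists a; rewrite ha hw.
  move=> /= hd.
  rewrite nbr_in2 ?hu //.
  have ho := nbr_out2 e1 e2 S1 u hv.
  move: hd ho dm2 hk1.
  move: (deltaS _ _ _) (deltaS _ _ _) (deltaS _ _ _) (deg _ _) (maxdeg _) => x y z w m.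
  lia.
- case/orP: hc => [/andP[/eqP eu _]|/andP[/eqP eu _]].
    by rewrite eu ha in hu.
  by rewrite eu hb in hv.
Qed.
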